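(* Let $t\ge 1$, $k\ge t+1$, $v\ge 2$, $\lambda\ge1$. If an SSOA$_\lambda(t,k,v)$ exists, then a simple COA$_\lambda(t,k+t-1,v)$ exists. Explicitly, if $A_1,\dots,A_k$ are the columns of the SSOA, the array $(A_1,A_2,\dots,A_k,A_1,A_2,\dots,A_{t-1})$ is such a simple COA.
   Context: An orthogonal array OA$_\lambda(t,k,v)$ is a $\lambda v^t\times k$ array over a $v$-set $V$ such that every $N\times t$ subarray contains every $t$-tuple exactly $\lambda$ times as a row. It is super-simple, written SSOA$_\lambda(t,k,v)$, if any $t+1$ of its columns contain every $(t+1)$-tuple at most once as a row. A COA$_\lambda(t,k,v)$ is a $\lambda v^t\times k$ array over $V$ in which every set of $t$ consecutive columns contains every $t$-tuple exactly $\lambda$ times. It is simple if for any two distinct sets of $t$ consecutive columns sharing exactly $i$ columns ($0\le i\le t-1$), the subarray on the $2t-i$ columns of their union contains each $(2t-i)$-tuple at most once. *)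

(* Defs.v *)
From mathcomp Require Import all_boot.
Set Implicit Arguments. Unset Strict Implicit. Unset Printing Implicit Defensive.

Definition is_OA (lam t k v : nat) (V : finType)
    (A : 'I_(lam * v ^ t) -> 'I_k -> V) : Prop :=
  #|V| = v /\
  forall c : 'I_t -> 'I_k, injective c ->
  forall x : 'I_t -> V,
    #|[set r | [forall j, A r (c j) == x j]]| = lam.

Definition is_SSOA (lam t k v : nat) (V : finType)
    (A : 'I_(lam * v ^ t) -> 'I_k -> V) : Prop :=
  is_OA A /\
  forall c : 'I_t.+1 -> 'I_k, injective c ->
  forall x : 'I_t.+1 -> V,
    #|[set r | [forall j, A r (c j) == x j]]| <= 1.

Definition window (k t i : nat) : {set 'I_k} :=
  [set c : 'I_k | i <= c < i + t].

Definition occ (N k : nat) (V : finType) (A : 'I_N -> 'I_k -> V)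
    (S : {set 'I_k}) (x : 'I_k -> V) : nat :=
  #|[set r | [forall c in S, A r c == x c]]|.

(* The tuple on the
   window is given as the restriction of an arbitrary x : 'I_k -> V. *)
Definition is_COA (lam t k v : nat) (V : finType)
    (A : 'I_(lam * v ^ t) -> 'I_k -> V) : Prop :=
  #|V| = v /\
  forall i, i + t <= k -> forall x : 'I_k -> V, occ A (window k t i) x = lam.

Definition is_simple_COA (lam t k v : nat) (V : finType)
    (A : 'I_(lam * v ^ t) -> 'I_k -> V) : Prop :=
  is_COA A /\
  forall a b, a < b -> b + t <= k -> forall x : 'I_k -> V,
    occ A (window k t a :|: window k t b) x <= 1.

(* The array (A_1, ..., A_k, A_1, ..., A_{t-1}): column j of the new array is
   column (j mod k) of A. *)
Definition cyc_ext (N k t : nat) (V : finType) (hk : 0 < k)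
    (A : 'I_N -> 'I_k -> V) : 'I_N -> 'I_(k + t - 1) -> V :=
  fun r j => A r (Ordinal (ltn_pmod j hk)).

(* Main.v *)
Require Import Defs.
From mathcomp Require Import all_boot.
From mathcomp Require Import zify.

Lemma modD_inj k a x y : (a + x) %% k = (a + y) %% k -> x < k -> y < k -> x = y.
Proof. move=> + hx hy; move/eqP; rewrite eqn_modDl (modn_small hx) (modn_small hy) => /eqP //. Qed.

Theorem mainTheorem5 (t k v lam : nat) (V : finType)
    (ht : 1 <= t) (hk : t.+1 <= k) (hv : 2 <= v) (hlam : 1 <= lam)
    (A : 'I_(lam * v ^ t) -> 'I_k -> V) :
  is_SSOA A ->
  (exists B : 'I_(lam * v ^ t) -> 'I_(k + t - 1) -> V, is_simple_COA B) /\
  is_simple_COA (@cyc_ext _ k t V (leq_trans (ltn0Sn t) hk) A).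
Proof.
move=> [[hV hOA] hSS].
set hk0 := leq_trans (ltn0Sn t) hk.
set B := @cyc_ext _ k t V hk0 A.
suff HB : is_simple_COA B by split=> //; exists B.
split.
  split=> // i hi x.
  have hs : forall m : 'I_t, i + m < k + t - 1.
    by move=> m; have := ltn_ord m; lia.
  pose s m := Ordinal (hs m).
  pose c m := Ordinal (ltn_pmod (s m) hk0).
  have cinj : injective c.
    move=> m m' /(congr1 val) /= H; apply: ord_inj.
    move: H => /= /modD_inj h3; have := ltn_ord m; have := ltn_ord m'; move=> h1 h2; apply: h3; lia.
  apply: etrans (hOA c cinj (fun m => x (s m))); rewrite /occ.
  apply: eq_card => r; rewrite !inE.
  apply/forall_inP/forallP.
    by move=> H j; apply: (H (s j)); rewrite inE /=; have := ltn_ord j; lia.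
  move=> H j; rewrite inE => /andP [h1 h2].
  have hm : j - i < t by lia.
  have -> : j = s (Ordinal hm) by apply: val_inj => /=; lia.
  exact: H.
move=> a b hab hb x.
pose f (m : 'I_t.+1) := if m < t then nat_of_ord m else if b <= a + t then t else b - a.
have hs : forall m, a + f m < k + t - 1.
  by move=> m; rewrite /f; have := ltn_ord m; repeat (case: ifP => ?); lia.
pose s m := Ordinal (hs m).
pose c m := Ordinal (ltn_pmod (s m) hk0).
have fk : forall m, f m < k.
  by move=> m; rewrite /f; have := ltn_ord m; repeat (case: ifP => ?); lia.
have cinj : injective c.
  move=> m m' /(congr1 val) /= H; apply: ord_inj.
  have := @modD_inj _ _ _ _ H (fk m) (fk m').
  rewrite /f; have := ltn_ord m; have := ltn_ord m'.
  repeat (case: ifP => ?); try lia.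
apply: leq_trans (hSS c cinj (fun m => x (s m))).
apply: subset_leq_card; apply/subsetP => r; rewrite !inE => /forall_inP H.
apply/forallP => j; apply: (H (s j)).
rewrite !inE /= /f; have := ltn_ord j.
repeat (case: ifP => ?); lia.
Qed.
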